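(* $$\sum_{n=0}^{\infty}\frac{(-1)^{m_n}}{c(n)}=\frac12 .$$
   Context: For $n\ge 0$, $c(n)=\sum_{i=0}^{n}\left(\binom{n}{i}\bmod 2\right)2^{i}$, the integer whose binary digits form the $n$-th row of Pascal's triangle modulo $2$. $(m_n)_{n\ge0}$ is the Thue–Morse sequence: $m_n\equiv s(n)\pmod 2$, where $s(n)$ is the number of $1$'s in the binary expansion of $n$. *)

(* Defs.v *)
From mathcomp Require Import all_boot.
From Stdlib Require Import Reals.

Definition c (n : nat) : nat := (\sum_(i < n.+1) ('C(n, i) %% 2) * 2 ^ i)%N.

(* s(n) = number of 1's in the binary expansion of n; bit i of n is (n / 2^i) mod 2,
   and all bits of index > n vanish since 2^i > n. *)
Definition s (n : nat) : nat := (\sum_(i < n.+1) (n %/ 2 ^ i) %% 2)%N.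

Definition m (n : nat) : nat := (s n %% 2)%N.

(* Main.v *)
Require Import Defs.
From mathcomp Require Import all_boot.
From Stdlib Require Import Reals.
From Stdlib Require Import Lra.
Import ssrnat.


Lemma sum_ext_zero (F: nat->nat) a b : a <= b -> (forall i, a <= i -> F i = 0) ->
  \sum_(i<b) F i = \sum_(i<a) F i.
Proof.
move=> ab H; rewrite (big_ord_widen b F ab) [RHS]big_mkcond /=.
apply: eq_bigr => i _; case: ifP => // /negbT; rewrite -leqNgt => /H ->. by [].
Qed.

Lemma bin2K_even K j : 0 < j < 2^K -> ~~ odd 'C(2^K, j).
Proof.
case/andP=> j0 jP; apply/negP => oC.
have : 2^K %| j * 'C(2^K, j).
  case: j j0 jP oC => // j' _ _ _.
  rewrite -mul_bin_diag; exact: dvdn_mulr.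
rewrite Gauss_dvdl; last by apply: coprimeXl; rewrite coprime2n.
by move/(dvdn_leq j0); rewrite leqNgt jP.
Qed.

Lemma binmod K n i : n < 2^K ->
  'C(2^K + n, i) %% 2 = ('C(n, i) + (2^K <= i) * 'C(n, i - 2^K)) %% 2.
Proof.
move=> nP.
have P0 : 0 < 2^K by rewrite expn_gt0.
rewrite -Vandermonde -modn_summ.
rewrite (eq_bigr (fun j : 'I_i.+1 => (((j == 0 :> nat) * 'C(n, i)) + ((j == 2^K :> nat) * 'C(n, i - 2^K))) %% 2)); last first.
  move=> j _.
  case: (posnP j) => [-> | jpos].
    rewrite bin0 mul1n subn0 /= eq_sym (negbTE (lt0n_neq0 P0)) mul1n addn0.
    by [].
  have j0 : (j == 0 :> nat) = false by rewrite (negbTE (lt0n_neq0 jpos)).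
  rewrite mul0n add0n.
  case: (ltngtP j (2^K)) => [jlt | jgt | ->].
  - by rewrite mul0n !modn2 oddM (negbTE (bin2K_even K j (introT andP (conj jpos jlt)))).
  - by rewrite bin_small // mul0n mul0n.
  - by rewrite binn !mul1n.
rewrite modn_summ big_split /=.
rewrite big_ord_recl /= mul1n (eq_bigr (fun _ => 0)); last by [].
rewrite big_const_ord iter_addn_0 mul0n addn0.
congr ((_ + _) %% 2).
case: (leqP (2^K) i) => Hi.
  have Hi' : 2^K < i.+1 by [].
  rewrite (bigD1 (Ordinal Hi')) //= eqxx mul1n big1 ?addn0 ?Hi ?mul1n // => j Hj.
  rewrite (_ : (j == 2^K :> nat) = false) ?mul0n //; apply/negbTE; move: Hj; apply: contra => /eqP E; apply/eqP; exact: val_inj.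
rewrite big1 ?(leqNgt (2^K) i) ?Hi // => j _.
by rewrite (ltn_eqF (leq_trans (ltn_ord j) Hi)).
Qed.

Lemma binP K n i : n < 2^K ->
  (odd 'C(2^K + n, i) : nat) = odd 'C(n, i) + (2^K <= i) * odd 'C(n, i - 2^K).
Proof.
move=> nP; rewrite -!modn2 binmod //.
case: (leqP (2^K) i) => Hi /=.
  by rewrite (bin_small (leq_trans nP Hi)) add0n mul1n mod0n add0n /nat_of_bool mul1n.
by rewrite !mul0n !addn0.
Qed.

Lemma powE m n : Nat.pow m n = m ^ n.
Proof. elim: n => // n IH. by rewrite expnS /= IH. Qed.

Definition cb n B := \sum_(i<B) odd 'C(n,i) * 2^i.

Lemma c_cb n B : n < B -> c n = cb n B.
Proof.
move=> nB; rewrite /c /cb.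
rewrite (@sum_ext_zero (fun i => odd 'C(n,i) * 2^i) n.+1 B nB); last first.
  by move=> i ni; rewrite bin_small.
by apply: eq_bigr => i _; rewrite modn2 powE.
Qed.

Lemma c_double K n : n < 2^K -> c (2^K + n) = (2^(2^K) + 1) * c n.
Proof.
move=> nP.
rewrite (c_cb (2^K+n) (2^K + n.+1)); last by rewrite addnS.
rewrite /cb big_split_ord /=.
rewrite (eq_bigr (fun i : 'I_(2^K) => odd 'C(n,i) * 2^i)); last first.
  by move=> i _; rewrite binP // leqNgt ltn_ord /= mul0n addn0.
rewrite (eq_bigr (fun i : 'I_n.+1 => 2^(2^K) * (odd 'C(n,i) * 2^i))); last first.
  move=> i _; rewrite binP // leq_addr /= subDnCA // subnn addn0 mul1n.
  rewrite bin_small ?add0n; last by apply: (leq_trans nP); rewrite leq_addr.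
  by rewrite expnD mulnCA.
rewrite -big_distrr /= -/(cb n (2^K)) -/(cb n n.+1) -!c_cb //.
by rewrite mulnDl mul1n addnC.
Qed.

Lemma c_ge n : 2^n <= c n.
Proof.
rewrite (c_cb n n.+1) // /cb big_ord_recr /= binn /= mul1n.
exact: leq_addl.
Qed.

Definition sb n B := \sum_(i<B) odd (n %/ 2^i).

Lemma s_sb n B : n < B -> s n = sb n B.
Proof.
move=> nB; rewrite /s /sb.
rewrite (@sum_ext_zero (fun i => (odd (n %/ 2^i) : nat)) n.+1 B nB); last first.
  move=> i ni; rewrite divn_small //.
  by apply: (leq_trans ni); apply: ltnW; apply: ltn_expl.
by apply: eq_bigr => i _; rewrite modn2 powE.
Qed.

Lemma bit_double K n i : n < 2^K ->
  (odd ((2^K + n) %/ 2^i) : nat) = odd (n %/ 2^i) + (i == K).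
Proof.
move=> nP.
case: (ltngtP i K) => [iK | iK | ->].
- rewrite addn0.
  have -> : 2^K = 2^(K-i) * 2^i by rewrite -expnD subnK // ltnW.
  rewrite divnMDl ?expn_gt0 // oddD oddX /=.
  by rewrite subn_eq0 leqNgt iK.
- rewrite addn0.
  have hi : 2^K + n < 2^i.
    apply: (@leq_trans (2^K.+1)).
      by rewrite expnS mul2n -addnn ltn_add2l.
    by rewrite leq_pexp2l.
  rewrite !divn_small //. apply: (leq_trans nP). by rewrite leq_pexp2l // ltnW.
- rewrite -{1}(mul1n (2^K)) divnMDl ?expn_gt0 //.
  by rewrite divn_small.
Qed.

Lemma s_double K n : n < 2^K -> s (2^K + n) = (s n).+1.
Proof.
move=> nP.
have KP : K < 2^K by apply: ltn_expl.
rewrite (s_sb (2^K+n) (2^K + n.+1)); last by rewrite addnS.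
rewrite (s_sb n (2^K + n.+1)); last by rewrite addnS ltnS leq_addl.
rewrite /sb (eq_bigr (fun i : 'I_(2^K + n.+1) => odd (n %/ 2^i) + (i == K :> nat))); last first.
  by move=> i _; rewrite bit_double.
rewrite big_split /= -[RHS]addn1; congr (_ + _).
have KB : K < 2^K + n.+1 by apply: (leq_trans KP); rewrite leq_addr.
rewrite (bigD1 (Ordinal KB)) //= eqxx big1 ?addn0 // => j Hj.
rewrite (_ : (j == K :> nat) = false) //; apply/negbTE; move: Hj; apply: contra => /eqP E; apply/eqP; exact: val_inj.
Qed.

Open Scope R_scope.

Definition f (n : nat) : R := ((-1) ^ (m n) / INR (c n))%R.

Lemma neg1_odd k : (-1) ^ k = if odd k then -1 else 1.
Proof.
elim: k => [|k IH] /=; first by [].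
rewrite IH; case: (odd k) => /=; lra.
Qed.

Lemma INR_exp2 e : INR (2 ^ e)%N = 2 ^ e.
Proof. rewrite -powE pow_INR. simpl INR. by rewrite (_ : 1 + 1 = 2); [|lra]. Qed.

Lemma two_le e : (1 <= e)%N -> 2 <= 2 ^ e.
Proof.
case: e => // e _. rewrite /= ; have := pow_R1_Rle 2 e; lra.
Qed.

Lemma c_pos n : 0 < INR (c n).
Proof.
apply: lt_0_INR; apply/ltP; apply: (leq_trans _ (c_ge n)); by rewrite expn_gt0.
Qed.

Lemma f_double K n : (n < 2 ^ K)%N -> f (2 ^ K + n)%N = (- / (2 ^ (2 ^ K)%N + 1)) * f n.
Proof.
move=> nP; rewrite /f /m s_double // c_double // mult_INR plus_INR INR_exp2 /=.
rewrite !neg1_odd !modn2 /=.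
have := c_pos n; have := two_le (2 ^ K)%N; rewrite expn_gt0 => /(_ isT) H1 H2.
case: (odd (s n)) => /=; field; lra.
Qed.

Fixpoint psum (g : nat -> R) (N : nat) : R :=
  match N with O => 0 | S k => psum g k + g k end.

Lemma psum_add g a b : psum g (a + b)%N = psum g a + psum (fun n => g (a + n)%N) b.
Proof. elim: b => [|b IH]; first by rewrite addn0 /=; lra. rewrite addnS /= IH; lra. Qed.

Lemma psum_ext g h b : (forall n, (n < b)%N -> g n = h n) -> psum g b = psum h b.
Proof. elim: b => [|b IH] H //=. rewrite IH ?H // => n nb; apply: H; exact: ltnW. Qed.

Lemma psum_scal g k b : psum (fun n => k * g n) b = k * psum g b.
Proof. elim: b => [|b IH] /=; first lra. rewrite IH; lra. Qed.

Lemma sum_psum g n : sum_f_R0 g n = psum g n.+1.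
Proof. elim: n => [|n IH] /=; first lra. by rewrite IH. Qed.

Definition A K := psum f (2 ^ K)%N.

Lemma f0 : f 0 = 1.
Proof. rewrite /f /m /s /c !big_ord1 /=. compute. lra. Qed.

Lemma A_closed K : A K = 2 ^ (2 ^ K)%N / (2 * (2 ^ (2 ^ K)%N - 1)).
Proof.
elim: K => [|K IH].
  rewrite /A /= f0 /=. field.
have X2 := two_le (2 ^ K)%N; rewrite expn_gt0 in X2; have {}X2 := X2 isT.
rewrite /A expnS mul2n -addnn psum_add -/(A K).
rewrite (psum_ext _ (fun n => (- / (2 ^ (2 ^ K)%N + 1)) * f n)); last first.
  by move=> n nP; rewrite f_double.
rewrite psum_scal -/(A K) IH.
rewrite -plusE pow_add.
field; split; nra.
Qed.

Lemma pow2_pos n : 0 < 2 ^ n.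
Proof. apply: pow_lt; lra. Qed.

Lemma f_bound n : Rabs (f n) <= / 2 ^ n.
Proof.
rewrite /f /Rdiv Rabs_mult pow_1_abs Rabs_inv Rabs_pos_eq; last exact: pos_INR.
rewrite Rmult_1_l; apply: Rinv_le_contravar; first exact: pow2_pos.
rewrite -INR_exp2; apply: le_INR; apply/leP; exact: c_ge.
Qed.

Lemma inv_pow_S n : / 2 ^ n.+1 = / 2 ^ n / 2.
Proof. rewrite /=; have := pow2_pos n; move=> H; field; lra. Qed.

Lemma tail g N k : (forall n, Rabs (g n) <= / 2 ^ n) ->
  Rabs (psum g (N+k)%N - psum g N) + 2 * / 2^(N+k)%N <= 2 * / 2^N.
Proof.
move=> Hg; elim: k => [|k IH].
  rewrite addn0 Rminus_diag Rabs_R0; lra.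
rewrite addnS /= -/(psum g (N+k)%N).
have H1 := Rabs_triang (psum g (N + k)%N - psum g N) (g (N+k)%N).
have H2 := Hg (N+k)%N.
have -> : psum g (N + k)%N + g (N + k)%N - psum g N = psum g (N + k)%N - psum g N + g (N + k)%N by lra.
have := pow2_pos (N+k)%N => H3.
rewrite inv_pow_S.
lra.
Qed.

Theorem mainTheorem16 :
  infinite_sum (fun n : nat => ((-1) ^ (m n) / INR (c n))%R) (1 / 2)%R.
Proof.
move=> eps Heps.
have h1 : Rabs (/2) < 1 by rewrite Rabs_pos_eq; lra.
have h2 : 0 < eps / 3 by lra.
have [N0 HN0] := pow_lt_1_zero (/2) h1 (eps/3) h2.
exists N0 => n Hn; rewrite /R_dist.
rewrite (_ : sum_f_R0 _ n = sum_f_R0 f n) // sum_psum.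
set M := n.+1.
have MP : (M <= 2^M)%N by apply: ltnW; apply: ltn_expl.
have Ht := tail f M (2^M - M) f_bound.
rewrite subnKC // -/(A M) in Ht.
have X2 := two_le (2 ^ M)%N; rewrite expn_gt0 in X2; have {}X2 := X2 isT.
have XY : 2 ^ M <= 2 ^ (2 ^ M)%N by apply: Rle_pow; [lra | apply/leP].
have YP := pow2_pos M.
have HA : Rabs (A M - 1/2) <= / 2^M.
  rewrite A_closed.
  have -> : 2 ^ (2 ^ M)%N / (2 * (2 ^ (2 ^ M)%N - 1)) - 1 / 2 = / (2 * (2 ^ (2 ^ M)%N - 1)) by field; lra.
  rewrite Rabs_pos_eq; last by apply: Rlt_le; apply: Rinv_0_lt_compat; lra.
  apply: Rinv_le_contravar => //; lra.
have := HN0 n Hn; rewrite pow_inv Rabs_pos_eq; last by apply: Rlt_le; apply: Rinv_0_lt_compat; apply: pow2_pos.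
move=> Hn'.
rewrite /M in Ht HA; rewrite inv_pow_S in Ht HA.
have Z := Rabs_triang (psum f M - A M) (A M - 1/2).
rewrite Rabs_minus_sym in Ht.
have -> : psum f M - 1/2 = psum f M - A M + (A M - 1/2) by lra.
have : 0 <= 2 * / 2 ^ (2 ^ M)%N.
  apply: Rmult_le_pos; first lra. apply: Rlt_le; apply: Rinv_0_lt_compat; apply: pow2_pos.
rewrite /M in Z |- *.
lra.
Qed.
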